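(* Let $m,n\ge 1$ and let $k>0$ and $l$ be fixed integers. Let $P,Q$ be constant $n\times n$ complex matrices, let $\mathfrak{R}(P)$ be a finite set of distinct invertible constant $n\times n$ matrices $\Lambda$ with $-(\Lambda^{k}+\Lambda^{k-l})=P$, and let $\mathfrak{R}(Q)$ be a finite set of distinct invertible constant $n\times n$ matrices $\tilde\Lambda$ with $-(\tilde\Lambda^{k}+\tilde\Lambda^{k-l})=Q$. For each $\Lambda\in\mathfrak{R}(P)$ let $A_\Lambda$ be a constant $m\times n$ matrix, for each $\tilde\Lambda\in\mathfrak{R}(Q)$ let $B_{\tilde\Lambda}$ be a constant $n\times m$ matrix, and for each pair let $X_{\tilde\Lambda,\Lambda}$ be a constant $n\times n$ matrix satisfying $\tilde\Lambda^{-l}X_{\tilde\Lambda,\Lambda}\Lambda^{l}-X_{\tilde\Lambda,\Lambda}=B_{\tilde\Lambda}A_\Lambda$. Let $\tilde\omega=\tilde\omega(t)$ be a differentiable $n\times n$ matrix function of $t$ only with $Q\,\tilde\omega=\tilde\omega\,P$, and set $\gamma_2=-\tilde\omega_t$. Define $$\theta=\sum_{\Lambda\in\mathfrak{R}(P)}A_\Lambda e^{\Lambda^l t}\Lambda^j,\qquad \eta=\sum_{\tilde\Lambda\in\mathfrak{R}(Q)}e^{-\tilde\Lambda^l t}\tilde\Lambda^{-j}B_{\tilde\Lambda},$$ $$\tilde\Omega=\sum_{\Lambda\in\mathfrak{R}(P),\,\tilde\Lambda\in\mathfrak{R}(Q)}e^{-\tilde\Lambda^l t}\tilde\Lambda^{-j}X_{\tilde\Lambda,\Lambda}e^{\Lambda^l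 t}\Lambda^j+\tilde\omega,$$ and assume $\tilde\Omega$ is invertible. Let $\varphi_0$ be a constant $m\times m$ matrix. Then $$\varphi=\varphi_0+\theta\,\tilde\Omega^{-1}\eta_{(-l)},\qquad \hat q=-\theta\,\tilde\Omega^{-1}\gamma_2,\qquad \tilde r=-\tilde\Omega_{(l)}^{-1}\eta$$ solve the system $$(\varphi_{(k)}-\varphi)_t+(\varphi_{(k)}-\varphi+I)(\varphi_{(l)}-\varphi)_{(k-l)}-(\varphi_{(l)}-\varphi)(\varphi_{(k)}-\varphi+I)=(\hat q\,\tilde r_{(-l)})_{(k)}-\hat q\,\tilde r_{(-l)},$$ $$\hat q_{(k)}=-(\varphi_{(k)}-\varphi+I)\,\hat q_{(k-l)}-\hat q\,P,\qquad \tilde r_{(-l)}=-\tilde r\,(\varphi_{(k)}-\varphi+I)-P\,\tilde r_{(k-l)}.$$ Consequently $W=\varphi_{(1)}-\varphi+\frac1k I$ together with $\hat q,\tilde r$ solves $$\Big(\sum_{i=0}^{k-1}W_{(i)}\Big)_t+\sum_{i=0}^{k-1}W_{(i)}\sum_{i=k-l}^{k-1}W_{(i)}-\sum_{i=0}^{l-1}W_{(i)}\sum_{i=0}^{k-1}W_{(i)}=(\hat q\,\tilde r_{(-l)})_{(k)}-\hat q\,\tilde r_{(-l)},$$ $$\hat q_{(k)}=-\sum_{i=0}^{k-1}W_{(i)}\,\hat q_{(k-l)}-\hat q\,P,\qquad \tilde r_{(-l)}=-\tilde r\sum_{i=0}^{k-1}W_{(i)}-P\,\tilde r_{(k-l)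}.$$
   Context: All dependent variables are matrix-valued functions of a continuous variable $t$ and a discrete variable $j\in\mathbb{Z}$; subscript $t$ denotes the derivative with respect to $t$, and for an integer $s$, $f_{(s)}(t,j)=f(t,j+s)$ denotes the shifted function. $I$ denotes the identity matrix. *)

(* Defs.v *)
From HB Require Import structures.
From mathcomp Require Import all_boot all_order all_algebra.
From mathcomp Require Import complex.
From mathcomp Require Import all_classical all_reals.
From mathcomp Require Import topology normedtype sequences derive.
Set Implicit Arguments.
Unset Strict Implicit.
Unset Printing Implicit Defensive.
Import Order.TTheory GRing.Theory Num.Theory.
Import numFieldNormedType.Exports.
Local Open Scope ring_scope.
Local Open Scope complex_scope.

Definition cderivable {R : realType} (f : R -> R[i]) (t : R) : Prop :=
  derivable (fun s : R => complex.Re (f s)) t 1 /\ derivable (fun s : R => complex.Im (f s)) t 1.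

Definition cderive {R : realType} (f : R -> R[i]) (t : R) : R[i] :=
  (derive1 (fun s : R => complex.Re (f s)) t) +i* (derive1 (fun s : R => complex.Im (f s)) t).

Definition mderivable {R : realType} {a b : nat} (F : R -> 'M[R[i]]_(a, b)) (t : R) : Prop :=
  forall i j, cderivable (fun s : R => F s i j) t.

Definition mderive {R : realType} {a b : nat} (F : R -> 'M[R[i]]_(a, b)) (t : R)
  : 'M[R[i]]_(a, b) :=
  \matrix_(i, j) cderive (fun s : R => F s i j) t.

Definition mexp_partial {R : realType} {n : nat} (M : 'M[R[i]]_n.+1) (N : nat)
  : 'M[R[i]]_n.+1 :=
  \sum_(p < N) (((p`!)%:R : R[i])^-1 *: M ^+ p).

Definition mexp {R : realType} {n : nat} (M : 'M[R[i]]_n.+1) : 'M[R[i]]_n.+1 :=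
  \matrix_(i, j)
    ((limn (fun N => complex.Re (mexp_partial M N i j))) +i*
     (limn (fun N => complex.Im (mexp_partial M N i j)))).

(* Oriented integer-indexed sum: isum a b f = sum_{i=a}^{b-1} f i if a <= b,
   and - sum_{i=b}^{a-1} f i if b < a (so that isum a b + isum b c = isum a c). *)
Definition isum {V : zmodType} (a b : int) (f : int -> V) : V :=
  if (a <= b)%R then \sum_(i < `|b - a|%N) f (a + i%:Z)%R
  else - \sum_(i < `|b - a|%N) f (b + i%:Z)%R.

(* Main.v *)
Require Import Defs.
From HB Require Import structures.
From mathcomp Require Import all_boot all_order all_algebra.
From mathcomp Require Import complex.
From mathcomp Require Import all_classical all_reals.
From mathcomp Require Import topology normedtype sequences derive exp.
From mathcomp Require Import ring lra.
Import Order.TTheory GRing.Theory Num.Theory.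
Import numFieldNormedType.Exports.
Local Open Scope ring_scope.
Local Open Scope complex_scope.
Set Implicit Arguments.
Unset Strict Implicit.
Unset Printing Implicit Defensive.

Notation Rc := complex.Re.
Notation Ic := complex.Im.

Section Basic.
Variable R : realType.
Implicit Types (x y : R[i]) (t : R).

Lemma ReM x y : Rc (x * y) = Rc x * Rc y - Ic x * Ic y.
Proof. by case: x => a b; case: y => c d /=. Qed.
Lemma ImM x y : Ic (x * y) = Rc x * Ic y + Ic x * Rc y.
Proof. by case: x => a b; case: y => c d /=. Qed.
Lemma ReV x : Rc (x^-1) = Rc x / (Rc x ^+ 2 + Ic x ^+ 2).
Proof. by case: x => a b /=. Qed.
Lemma ImV x : Ic (x^-1) = - (Ic x / (Rc x ^+ 2 + Ic x ^+ 2)).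
Proof. by case: x => a b /=. Qed.
Lemma ReD x y : Rc (x + y) = Rc x + Rc y. Proof. by case: x; case: y. Qed.
Lemma ImD x y : Ic (x + y) = Ic x + Ic y. Proof. by case: x; case: y. Qed.
Lemma ReN x : Rc (- x) = - Rc x. Proof. by case: x. Qed.
Lemma ImN x : Ic (- x) = - Ic x. Proof. by case: x. Qed.
Lemma Re0 : Rc (0 : R[i]) = 0. Proof. by []. Qed.
Lemma Im0 : Ic (0 : R[i]) = 0. Proof. by []. Qed.
Lemma ReB x y : Rc (x - y) = Rc x - Rc y. Proof. by rewrite ReD ReN. Qed.
Lemma ImB x y : Ic (x - y) = Ic x - Ic y. Proof. by rewrite ImD ImN. Qed.
Lemma cplxE x : x = Rc x +i* Ic x. Proof. by case: x. Qed.

Lemma isdM (f g : R -> R) t (df dg : R) : is_derive t 1 f df -> is_derive t 1 g dg ->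
  is_derive t 1 (fun s => f s * g s) (df * g t + f t * dg).
Proof.
move=> Hf Hg; have -> : (fun s => f s * g s) = (f * g) by [].
apply: is_derive_eq (is_deriveM Hf Hg) _.
by rewrite /GRing.scale /= mulrC addrC [g t * _]mulrC.
Qed.
Lemma isdD (f g : R -> R) t (df dg : R) : is_derive t 1 f df -> is_derive t 1 g dg ->
  is_derive t 1 (fun s => f s + g s) (df + dg).
Proof. by move=> Hf Hg; have := is_deriveD Hf Hg. Qed.
Lemma isdN (f : R -> R) t (df : R) : is_derive t 1 f df ->
  is_derive t 1 (fun s => - f s) (- df).
Proof. by move=> Hf; have := is_deriveN Hf. Qed.
Lemma isdB (f g : R -> R) t (df dg : R) : is_derive t 1 f df -> is_derive t 1 g dg ->
  is_derive t 1 (fun s => f s - g s) (df - dg).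
Proof. by move=> Hf Hg; apply: isdD => //; apply: isdN. Qed.
Lemma isdC (c : R) t : is_derive t 1 (fun _ : R => c) 0.
Proof. exact: is_derive_cst. Qed.
Lemma isd_ext (f g : R -> R) t (d : R) : (forall s, f s = g s) -> is_derive t 1 f d -> is_derive t 1 g d.
Proof. by move=> e; have -> : f = g by apply/funext. Qed.
Lemma isd_val (f : R -> R) t (d d' : R) : d = d' -> is_derive t 1 f d -> is_derive t 1 f d'.
Proof. by move=> ->. Qed.

Lemma dvM (f g : R -> R) (t : R) : derivable f t 1 -> derivable g t 1 -> derivable (fun s => f s * g s) t 1.
Proof. move=> /derivableP H1 /derivableP H2; exact: (@ex_derive _ _ _ _ _ _ _ (isdM H1 H2)). Qed.
Lemma dvD (f g : R -> R) (t : R) : derivable f t 1 -> derivable g t 1 -> derivable (fun s => f s + g s) t 1.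
Proof. move=> /derivableP H1 /derivableP H2; exact: (@ex_derive _ _ _ _ _ _ _ (isdD H1 H2)). Qed.
Lemma dvN (f : R -> R) (t : R) : derivable f t 1 -> derivable (fun s => - f s) t 1.
Proof. move=> /derivableP H1; exact: (@ex_derive _ _ _ _ _ _ _ (isdN H1)). Qed.
Lemma dvV (f : R -> R) (t : R) : f t != 0 -> derivable f t 1 -> derivable (fun s => (f s)^-1) t 1.
Proof. move=> H1 H2. exact: (@derivableV R R f t 1 H1 H2). Qed.

Definition cder (f : R -> R[i]) t (d : R[i]) :=
  is_derive t 1 (fun s => Rc (f s)) (Rc d) /\ is_derive t 1 (fun s => Ic (f s)) (Ic d).

Lemma cder_cderive f t d : cder f t d -> cderivable f t /\ cderive f t = d.
Proof.
case=> H1 H2; split; first by split; [exact: (@ex_derive _ _ _ _ _ _ _ H1)|exact: (@ex_derive _ _ _ _ _ _ _ H2)].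
by rewrite /cderive !derive1E !derive_val -cplxE.
Qed.

Lemma cderivable_cder f t : cderivable f t -> cder f t (cderive f t).
Proof.
case=> H1 H2; rewrite /cder /cderive /= !derive1E; split; exact: derivableP.
Qed.

Lemma cder_ext f g t d : (forall s, f s = g s) -> cder f t d -> cder g t d.
Proof. by move=> e; have -> : f = g by apply/funext. Qed.
Lemma cder_val f t d d' : d = d' -> cder f t d -> cder f t d'.
Proof. by move=> ->. Qed.

Lemma cder_cst (c : R[i]) t : cder (fun _ => c) t 0.
Proof. by split; apply: isdC. Qed.

Lemma cder_add f g t df dg : cder f t df -> cder g t dg -> cder (fun s => f s + g s) t (df + dg).
Proof.
case=> H1 H2 [H3 H4]; split.
  by rewrite ReD; apply: isd_ext (isdD H1 H3) => s; rewrite ReD.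
by rewrite ImD; apply: isd_ext (isdD H2 H4) => s; rewrite ImD.
Qed.

Lemma cder_opp f t df : cder f t df -> cder (fun s => - f s) t (- df).
Proof.
case=> H1 H2; split.
  by rewrite ReN; apply: isd_ext (isdN H1) => s; rewrite ReN.
by rewrite ImN; apply: isd_ext (isdN H2) => s; rewrite ImN.
Qed.

Lemma cder_sub f g t df dg : cder f t df -> cder g t dg -> cder (fun s => f s - g s) t (df - dg).
Proof. by move=> H1 H2; apply: cder_add H1 (cder_opp H2). Qed.

Lemma cder_mul f g t df dg : cder f t df -> cder g t dg ->
  cder (fun s => f s * g s) t (df * g t + f t * dg).
Proof.
case=> H1 H2 [H3 H4]; split.
  have K := isdB (isdM H1 H3) (isdM H2 H4).
  have K2 := isd_ext (fun s => esym (ReM (f s) (g s))) K.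
  by apply: isd_val K2; rewrite ReD !ReM; ring.
have K := isdD (isdM H1 H4) (isdM H2 H3).
have K2 := isd_ext (fun s => esym (ImM (f s) (g s))) K.
by apply: isd_val K2; rewrite ImD !ImM; ring.
Qed.

Lemma cder_sum (I : Type) (r : seq I) (P : pred I) (F : I -> R -> R[i]) t (D : I -> R[i]) :
  (forall i, P i -> cder (F i) t (D i)) ->
  cder (fun s => \sum_(i <- r | P i) F i s) t (\sum_(i <- r | P i) D i).
Proof.
move=> H; elim: r => [|a r IH].
  rewrite big_nil; apply: cder_ext (cder_cst 0 t) => s; by rewrite big_nil.
rewrite big_cons; case: ifP => Pa.
  by apply: cder_ext (cder_add (H a Pa) IH) => s; rewrite big_cons Pa.
by apply: cder_ext IH => s; rewrite big_cons Pa.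
Qed.

Lemma cder_prod (I : Type) (r : seq I) (P : pred I) (F : I -> R -> R[i]) t :
  (forall i, P i -> exists d, cder (F i) t d) ->
  exists d, cder (fun s => \prod_(i <- r | P i) F i s) t d.
Proof.
move=> H; elim: r => [|a r [d IH]].
  exists 0; apply: cder_ext (cder_cst 1 t) => s; by rewrite big_nil.
case: (boolP (P a)) => Pa.
  have [da Ha] := H a Pa.
  by eexists; apply: cder_ext (cder_mul Ha IH) => s; rewrite big_cons Pa.
by exists d; apply: cder_ext IH => s; rewrite big_cons (negbTE Pa).
Qed.

End Basic.

Section Mat.
Variable R : realType.
Implicit Types (t : R).

Definition mder {a b : nat} (F : R -> 'M[R[i]]_(a, b)) t (D : 'M[R[i]]_(a, b)) :=
  forall i j, cder (fun s => F s i j) t (D i j).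

Lemma mder_mderive a b (F : R -> 'M[R[i]]_(a, b)) t D :
  mder F t D -> mderivable F t /\ mderive F t = D.
Proof.
move=> H; split; first by move=> i j; case: (cder_cderive (H i j)).
by apply/matrixP => i j; rewrite mxE; case: (cder_cderive (H i j)).
Qed.

Lemma mderivable_mder a b (F : R -> 'M[R[i]]_(a, b)) t :
  mderivable F t -> mder F t (mderive F t).
Proof. by move=> H i j; rewrite mxE; apply: cderivable_cder. Qed.

Lemma mder_ext a b (F G : R -> 'M[R[i]]_(a, b)) t D :
  (forall s, F s = G s) -> mder F t D -> mder G t D.
Proof. by move=> e; have -> : F = G by apply/funext. Qed.
Lemma mder_val a b (F : R -> 'M[R[i]]_(a, b)) t D D' : D = D' -> mder F t D -> mder F t D'.
Proof. by move=> ->. Qed.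

Lemma mder_cst a b (C : 'M[R[i]]_(a, b)) t : mder (fun _ => C) t 0.
Proof. by move=> i j; rewrite mxE; apply: cder_cst. Qed.

Lemma mder_add a b (F G : R -> 'M[R[i]]_(a, b)) t DF DG :
  mder F t DF -> mder G t DG -> mder (fun s => F s + G s) t (DF + DG).
Proof.
move=> H1 H2 i j; rewrite mxE.
by apply: cder_ext (cder_add (H1 i j) (H2 i j)) => s; rewrite mxE.
Qed.

Lemma mder_opp a b (F : R -> 'M[R[i]]_(a, b)) t DF :
  mder F t DF -> mder (fun s => - F s) t (- DF).
Proof.
move=> H1 i j; rewrite mxE.
by apply: cder_ext (cder_opp (H1 i j)) => s; rewrite mxE.
Qed.

Lemma mder_sub a b (F G : R -> 'M[R[i]]_(a, b)) t DF DG :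
  mder F t DF -> mder G t DG -> mder (fun s => F s - G s) t (DF - DG).
Proof. by move=> H1 H2; apply: mder_add H1 (mder_opp H2). Qed.

Lemma mder_mul a b c (F : R -> 'M[R[i]]_(a, b)) (G : R -> 'M[R[i]]_(b, c)) t DF DG :
  mder F t DF -> mder G t DG -> mder (fun s => F s *m G s) t (DF *m G t + F t *m DG).
Proof.
move=> H1 H2 i j; rewrite !mxE.
have K := @cder_sum R _ (index_enum 'I_b) xpredT (fun k s => F s i k * G s k j) t (fun k => DF i k * G t k j + F t i k * DG k j)
   (fun k _ => cder_mul (H1 i k) (H2 k j)).
apply: cder_val (cder_ext _ K); first by rewrite -big_split.
by move=> s; rewrite mxE.
Qed.

Lemma mder_sum (I : Type) (r : seq I) (P : pred I) a b (F : I -> R -> 'M[R[i]]_(a, b)) t D :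
  (forall i, P i -> mder (F i) t (D i)) ->
  mder (fun s => \sum_(i <- r | P i) F i s) t (\sum_(i <- r | P i) D i).
Proof.
move=> H i j; rewrite summxE.
apply: cder_ext (@cder_sum R _ r P (fun k s => F k s i j) t (fun k => D k i j) (fun k Pk => H k Pk i j)) => s.
by rewrite summxE.
Qed.

Lemma cdv_of f t d : cder f t d -> cderivable f t.
Proof. by case/cder_cderive. Qed.

Lemma cdv_ext f g t : (forall s, f s = g s) -> cderivable f t -> cderivable g t.
Proof. by move=> e; have -> : f = g by apply/funext. Qed.

Lemma cdv_cst (c : R[i]) t : cderivable (fun _ => c) t.
Proof. exact: cdv_of (cder_cst c t). Qed.

Lemma cdv_mul f g t : cderivable f t -> cderivable g t -> cderivable (fun s => f s * g s) t.
Proof.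
move=> /cderivable_cder H1 /cderivable_cder H2; exact: cdv_of (cder_mul H1 H2).
Qed.

Lemma cdv_sum (I : Type) (r : seq I) (P : pred I) (F : I -> R -> R[i]) t :
  (forall i, P i -> cderivable (F i) t) ->
  cderivable (fun s => \sum_(i <- r | P i) F i s) t.
Proof.
move=> H; apply: cdv_of; apply: cder_sum => i Pi; exact: cderivable_cder (H i Pi).
Qed.

Lemma cdv_prod (I : Type) (r : seq I) (P : pred I) (F : I -> R -> R[i]) t :
  (forall i, P i -> cderivable (F i) t) ->
  cderivable (fun s => \prod_(i <- r | P i) F i s) t.
Proof.
move=> H; have [d Hd] := @cder_prod R _ r P F t
   (fun i Pi => ex_intro _ _ (cderivable_cder (H i Pi))).
exact: cdv_of Hd.
Qed.

Lemma sqr_sum_eq0 (a b : R) : a ^+ 2 + b ^+ 2 = 0 -> a = 0 /\ b = 0.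
Proof.
move=> /eqP; rewrite paddr_eq0 ?sqr_ge0 // !sqrf_eq0 => /andP[/eqP -> /eqP ->]; done.
Qed.

Lemma cdv_inv f t : cderivable f t -> f t != 0 -> cderivable (fun s => (f s)^-1) t.
Proof.
case=> H1 H2 fn0.
set a := (fun s => Rc (f s)) in H1; set b := (fun s => Ic (f s)) in H2.
have Dn0 : a t ^+ 2 + b t ^+ 2 != 0.
  apply/eqP => /sqr_sum_eq0 [e1 e2]; move: fn0; rewrite (cplxE (f t)).
  by rewrite -/(a t) -/(b t) e1 e2 eqxx.
have HD : derivable (fun s => a s ^+ 2 + b s ^+ 2) t 1.
  apply: (@dvD R (fun s => a s ^+ 2) (fun s => b s ^+ 2)).
    have -> : (fun s => a s ^+ 2) = (fun s => a s * a s) by apply/funext => s; rewrite expr2.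
    exact: dvM.
  have -> : (fun s => b s ^+ 2) = (fun s => b s * b s) by apply/funext => s; rewrite expr2.
  exact: dvM.
have HV := @dvV R (fun s => a s ^+ 2 + b s ^+ 2) t Dn0 HD.
split.
  have -> : (fun s => Rc ((f s)^-1)) = (fun s => a s * (a s ^+ 2 + b s ^+ 2)^-1).
    by apply/funext => s; rewrite ReV.
  exact: dvM.
have -> : (fun s => Ic ((f s)^-1)) = (fun s => - (b s * (a s ^+ 2 + b s ^+ 2)^-1)).
  by apply/funext => s; rewrite ImV.
apply: dvN; exact: dvM.
Qed.

Definition mdv {a b : nat} (F : R -> 'M[R[i]]_(a, b)) t := forall i j, cderivable (fun s => F s i j) t.

Lemma mdv_det n (F : R -> 'M[R[i]]_n) t : mdv F t -> cderivable (fun s => \det (F s)) t.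
Proof.
move=> H; rewrite /determinant.
apply: cdv_sum => sg _; apply: cdv_mul; first exact: cdv_cst.
by apply: cdv_prod => i _; apply: H.
Qed.

Lemma mdv_inv n (F : R -> 'M[R[i]]_n.+1) t :
  mdv F t -> (forall s, F s \in unitmx) -> mdv (fun s => (F s)^-1) t.
Proof.
move=> H U i j.
have E : forall s, ((F s)^-1) i j = (\det (F s))^-1 * ((-1) ^+ (j + i) * \det (row' j (col' i (F s)))).
  by move=> s; rewrite -[(F s)^-1]/(invmx (F s)) /invmx U !mxE.
apply: cdv_ext (fun s => esym (E s)) _.
apply: cdv_mul.
  apply: cdv_inv; first exact: mdv_det.
  by rewrite -unitfE -unitmxE.
apply: cdv_mul; first exact: cdv_cst.
apply: mdv_det => a b.
by apply: cdv_ext (H _ _) => s; rewrite !mxE.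
Qed.

Lemma mder_inv n (F : R -> 'M[R[i]]_n.+1) t DF :
  mder F t DF -> (forall s, F s \in unitmx) ->
  mder (fun s => (F s)^-1) t (- ((F t)^-1 * DF * (F t)^-1)).
Proof.
move=> H U.
have Hv : mdv F t by move=> i j; exact: cdv_of (H i j).
have HG := mdv_inv Hv U.
have HG' := mderivable_mder HG.
have K := mder_mul H HG'.
have K1 : mder (fun s => F s *m (F s)^-1) t 0.
  apply: mder_ext (mder_cst 1%:M t) => s.
  by rewrite mulmxE mulrV.
have E := (mder_mderive K).2; rewrite (mder_mderive K1).2 in E.
set G' := mderive _ t in E HG' *.
apply: mder_val HG'.
have E2 : F t *m G' = - (DF *m (F t)^-1) by apply/eqP; rewrite -addr_eq0 addrC -E.
have -> : G' = (F t)^-1 * (F t *m G') by rewrite mulmxE mulrA mulVr ?mul1r.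
by rewrite E2 -!mulmxE mulmxN mulmxA.
Qed.
Lemma mder_mulcl a b c (C : 'M[R[i]]_(a, b)) (G : R -> 'M[R[i]]_(b, c)) t DG :
  mder G t DG -> mder (fun s => C *m G s) t (C *m DG).
Proof. by move=> H; apply: mder_val (mder_mul (mder_cst C t) H); rewrite mul0mx add0r. Qed.
Lemma mder_mulcr a b c (F : R -> 'M[R[i]]_(a, b)) (C : 'M[R[i]]_(b, c)) t DF :
  mder F t DF -> mder (fun s => F s *m C) t (DF *m C).
Proof. by move=> H; apply: mder_val (mder_mul H (mder_cst C t)); rewrite mulmx0 addr0. Qed.
Lemma mder_addcl a b (C : 'M[R[i]]_(a, b)) (G : R -> 'M[R[i]]_(a, b)) t DG :
  mder G t DG -> mder (fun s => C + G s) t DG.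
Proof. by move=> H; apply: mder_val (mder_add (mder_cst C t) H); rewrite add0r. Qed.

End Mat.

Section Nu.
Variable R : realType.
Implicit Types (x y z : R[i]).

Definition nu z : R := `|Rc z| + `|Ic z|.
Lemma nu_ge0 z : 0 <= nu z. Proof. by rewrite addr_ge0. Qed.
Lemma nuD x y : nu (x + y) <= nu x + nu y.
Proof.
rewrite /nu ReD ImD addrACA; apply: lerD; exact: ler_normD.
Qed.
Lemma nuN x : nu (- x) = nu x. Proof. by rewrite /nu ReN ImN !normrN. Qed.
Lemma nu0 : nu 0 = 0. Proof. by rewrite /nu Re0 Im0 normr0 addr0. Qed.
Lemma nuM x y : nu (x * y) <= nu x * nu y.
Proof.
rewrite /nu ReM ImM mulrDr !mulrDl.
have h1 := ler_normB (Rc x * Rc y) (Ic x * Ic y).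
have h2 := ler_normD (Rc x * Ic y) (Ic x * Rc y).
rewrite !normrM in h1 h2.
apply: le_trans (lerD h1 h2) _.
by rewrite le_eqVlt; apply/orP; left; apply/eqP; ring.
Qed.
Lemma nu_Re z : `|Rc z| <= nu z. Proof. by rewrite lerDl. Qed.
Lemma nu_Im z : `|Ic z| <= nu z. Proof. by rewrite lerDr. Qed.
Lemma nu_sum (I : Type) (r : seq I) (P : pred I) (F : I -> R[i]) :
  nu (\sum_(i <- r | P i) F i) <= \sum_(i <- r | P i) nu (F i).
Proof.
elim: r => [|a r IH]; first by rewrite !big_nil nu0.
rewrite !big_cons; case: ifP => // _.
by apply: le_trans (nuD _ _) _; rewrite lerD2l.
Qed.

Definition mu {a b : nat} (A : 'M[R[i]]_(a, b)) : R := \sum_i \sum_j nu (A i j).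
Lemma mu_ge0 a b (A : 'M[R[i]]_(a, b)) : 0 <= mu A.
Proof. by apply: sumr_ge0 => i _; apply: sumr_ge0 => j _; exact: nu_ge0. Qed.
Lemma rowsum_le_mu a b (A : 'M[R[i]]_(a, b)) i : \sum_j nu (A i j) <= mu A.
Proof.
rewrite /mu (bigD1 i) //= lerDl; apply: sumr_ge0 => i' _; apply: sumr_ge0 => *; exact: nu_ge0.
Qed.
Lemma nu_le_mu a b (A : 'M[R[i]]_(a, b)) i j : nu (A i j) <= mu A.
Proof.
apply: le_trans (rowsum_le_mu A i).
rewrite (bigD1 j) //= lerDl; apply: sumr_ge0 => *; exact: nu_ge0.
Qed.
Lemma colsum_le_mu a b (A : 'M[R[i]]_(a, b)) j : \sum_i nu (A i j) <= mu A.
Proof.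
rewrite /mu; apply: ler_sum => i _.
rewrite (bigD1 j) //= lerDl; apply: sumr_ge0 => *; exact: nu_ge0.
Qed.
Lemma nu_mulmx a b c (A : 'M[R[i]]_(a, b)) (B : 'M[R[i]]_(b, c)) i j :
  nu ((A *m B) i j) <= \sum_k nu (A i k) * nu (B k j).
Proof. rewrite mxE; apply: le_trans (nu_sum _ _ _) _; apply: ler_sum => k _; exact: nuM. Qed.

Lemma nu_pow n (M : 'M[R[i]]_n.+1) p i j : nu ((M ^+ p) i j) <= mu M ^+ p.
Proof.
elim: p i j => [|p IH] i j.
  rewrite expr0 !mxE; case: eqP => _ /=.
    by rewrite /nu /= normr1 normr0 addr0.
  by rewrite /nu /= normr0 addr0.
rewrite exprSr -mulmxE; apply: le_trans (nu_mulmx _ _ _ _) _.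
apply: le_trans (_ : \sum_k mu M ^+ p * nu (M k j) <= _).
  by apply: ler_sum => k _; apply: ler_wpM2r; [exact: nu_ge0|exact: IH].
rewrite -mulr_sumr [in leRHS]exprSr; apply: ler_wpM2l; first by rewrite exprn_ge0 // mu_ge0.
exact: colsum_le_mu.
Qed.

Lemma nu_N1MN2 n a b (M : 'M[R[i]]_n.+1) (N1 : 'M[R[i]]_(a, n.+1)) (N2 : 'M[R[i]]_(n.+1, b)) p i j :
  nu ((N1 *m M ^+ p *m N2) i j) <= mu N1 * mu N2 * mu M ^+ p.
Proof.
have H1 k : nu ((N1 *m M ^+ p) i k) <= mu N1 * mu M ^+ p.
  apply: le_trans (nu_mulmx _ _ _ _) _.
  apply: le_trans (_ : \sum_k' nu (N1 i k') * mu M ^+ p <= _).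
    by apply: ler_sum => k' _; apply: ler_wpM2l; [exact: nu_ge0|exact: nu_pow].
  rewrite -mulr_suml; apply: ler_wpM2r; first by rewrite exprn_ge0 // mu_ge0.
  exact: rowsum_le_mu.
apply: le_trans (nu_mulmx _ _ _ _) _.
apply: le_trans (_ : \sum_k mu N1 * mu M ^+ p * nu (N2 k j) <= _).
  by apply: ler_sum => k _; apply: ler_wpM2r; [exact: nu_ge0|exact: H1].
rewrite -mulr_sumr [in leRHS]mulrAC; apply: ler_wpM2l.
  by rewrite mulr_ge0 // ?mu_ge0 // exprn_ge0 // mu_ge0.
exact: colsum_le_mu.
Qed.

Lemma cvg_pseries_bound (c : nat -> R) (C m x : R) : 0 <= C -> 0 <= m ->
  (forall p, `|c p| <= C * m ^+ p / p`!%:R) -> cvgn (pseries c x).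
Proof.
move=> C0 m0 Hc; apply: normed_cvg.
apply: (@series_le_cvg _ _ (C *: exp_coeff (m * `|x|))).
- by move=> p; exact: normr_ge0.
- by move=> p; rewrite /= mulr_ge0 // exp_coeff_ge0 // mulr_ge0.
- move=> p /=; rewrite /exp_coeff /=.
  apply: le_trans (_ : C * m ^+ p / p`!%:R * `|x| ^+ p <= _).
    by rewrite normrM normrX; apply: ler_wpM2r; [exact: exprn_ge0| exact: Hc].
  rewrite (_ : (C *: _) p = C * ((m * `|x|) ^+ p / p`!%:R)) //.
  rewrite exprMn le_eqVlt; apply/orP; left; apply/eqP; ring.
- exact: is_cvg_seriesZ (is_cvg_series_exp_coeff _).
Qed.
End Nu.

Local Open Scope classical_set_scope.
Section CvgSum.
Variable R : realType.
Lemma cvg_bigsum (I : Type) (r : seq I) (u : I -> nat -> R) (l : I -> R) :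
  (forall i, u i N @[N --> \oo] --> l i) ->
  (\sum_(i <- r) u i N) @[N --> \oo] --> \sum_(i <- r) l i.
Proof.
move=> H; elim: r => [|a r IH].
  rewrite big_nil; have -> : (fun N => \sum_(i <- [::]) u i N) = (fun _ => 0 : R).
    by apply/funext => N; rewrite big_nil.
  exact: cvg_cst.
rewrite big_cons; have -> : (fun N => \sum_(i <- a :: r) u i N) = (fun N => u a N) + (fun N => \sum_(i <- r) u i N).
  by apply/funext => N; rewrite big_cons.
exact: cvgD.
Qed.

Lemma ReSum (I : Type) (r : seq I) (P : pred I) (F : I -> R[i]) :
  Rc (\sum_(i <- r | P i) F i) = \sum_(i <- r | P i) Rc (F i).
Proof. elim: r => [|a r IH]; rewrite ?big_nil // !big_cons; case: ifP => //; by rewrite ReD IH. Qed.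
Lemma ImSum (I : Type) (r : seq I) (P : pred I) (F : I -> R[i]) :
  Ic (\sum_(i <- r | P i) F i) = \sum_(i <- r | P i) Ic (F i).
Proof. elim: r => [|a r IH]; rewrite ?big_nil // !big_cons; case: ifP => //; by rewrite ImD IH. Qed.

Definition ecvg {p q : nat} (F : nat -> 'M[R[i]]_(p, q)) (G : 'M[R[i]]_(p, q)) :=
  forall k k', (Rc (F N k k') @[N --> \oo] --> Rc (G k k')) /\ (Ic (F N k k') @[N --> \oo] --> Ic (G k k')).

Lemma ecvg_mulr p q b (F : nat -> 'M[R[i]]_(p, q)) G (B : 'M[R[i]]_(q, b)) :
  ecvg F G -> ecvg (fun N => F N *m B) (G *m B).
Proof.
move=> H i j; rewrite !mxE; split.
  have -> : (fun N => Rc ((F N *m B) i j)) = (fun N => \sum_k (Rc (F N i k) * Rc (B k j) - Ic (F N i k) * Ic (B k j))).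
    apply/funext => N; rewrite mxE ReSum; apply: eq_bigr => k _; by rewrite ReM.
  have -> : Rc (\sum_k G i k * B k j) = \sum_k (Rc (G i k) * Rc (B k j) - Ic (G i k) * Ic (B k j)).
    by rewrite ReSum; apply: eq_bigr => k _; rewrite ReM.
  apply: cvg_bigsum => k; case: (H i k) => H1 H2.
  apply: (cvgB (f := fun N => Rc (F N i k) * Rc (B k j)) (g := fun N => Ic (F N i k) * Ic (B k j))).
    exact: cvgMr_tmp.
  exact: cvgMr_tmp.
have -> : (fun N => Ic ((F N *m B) i j)) = (fun N => \sum_k (Rc (F N i k) * Ic (B k j) + Ic (F N i k) * Rc (B k j))).
  apply/funext => N; rewrite mxE ImSum; apply: eq_bigr => k _; by rewrite ImM.
have -> : Ic (\sum_k G i k * B k j) = \sum_k (Rc (G i k) * Ic (B k j) + Ic (G i k) * Rc (B k j)).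
  by rewrite ImSum; apply: eq_bigr => k _; rewrite ImM.
apply: cvg_bigsum => k; case: (H i k) => H1 H2.
apply: (cvgD (f := fun N => Rc (F N i k) * Ic (B k j)) (g := fun N => Ic (F N i k) * Rc (B k j))).
  exact: cvgMr_tmp.
exact: cvgMr_tmp.
Qed.

Lemma ecvg_mull a p q (F : nat -> 'M[R[i]]_(p, q)) G (A : 'M[R[i]]_(a, p)) :
  ecvg F G -> ecvg (fun N => A *m F N) (A *m G).
Proof.
move=> H i j; rewrite !mxE; split.
  have -> : (fun N => Rc ((A *m F N) i j)) = (fun N => \sum_k (Rc (A i k) * Rc (F N k j) - Ic (A i k) * Ic (F N k j))).
    apply/funext => N; rewrite mxE ReSum; apply: eq_bigr => k _; by rewrite ReM.
  have -> : Rc (\sum_k A i k * G k j) = \sum_k (Rc (A i k) * Rc (G k j) - Ic (A i k) * Ic (G k j)).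
    by rewrite ReSum; apply: eq_bigr => k _; rewrite ReM.
  apply: cvg_bigsum => k; case: (H k j) => H1 H2.
  apply: (cvgB (f := fun N => Rc (A i k) * Rc (F N k j)) (g := fun N => Ic (A i k) * Ic (F N k j))).
    exact: cvgMl_tmp.
  exact: cvgMl_tmp.
have -> : (fun N => Ic ((A *m F N) i j)) = (fun N => \sum_k (Rc (A i k) * Ic (F N k j) + Ic (A i k) * Rc (F N k j))).
  apply/funext => N; rewrite mxE ImSum; apply: eq_bigr => k _; by rewrite ImM.
have -> : Ic (\sum_k A i k * G k j) = \sum_k (Rc (A i k) * Ic (G k j) + Ic (A i k) * Rc (G k j)).
  by rewrite ImSum; apply: eq_bigr => k _; rewrite ImM.
apply: cvg_bigsum => k; case: (H k j) => H1 H2.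
apply: (cvgD (f := fun N => Rc (A i k) * Ic (F N k j)) (g := fun N => Ic (A i k) * Rc (F N k j))).
  exact: cvgMl_tmp.
exact: cvgMl_tmp.
Qed.
End CvgSum.

Local Close Scope classical_set_scope.

Local Open Scope classical_set_scope.

Section Mexp.
Variable R : realType.
Variable n : nat.
Variable M : 'M[R[i]]_n.+1.

Definition cR a b (N1 : 'M[R[i]]_(a, n.+1)) (N2 : 'M[R[i]]_(n.+1, b)) i j (p : nat) : R :=
  Rc ((N1 *m M ^+ p *m N2) i j) / p`!%:R.
Definition cI a b (N1 : 'M[R[i]]_(a, n.+1)) (N2 : 'M[R[i]]_(n.+1, b)) i j (p : nat) : R :=
  Ic ((N1 *m M ^+ p *m N2) i j) / p`!%:R.

Lemma ReZ (q : R) (z : R[i]) : Rc (q%:C * z) = q * Rc z.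
Proof. by rewrite ReM /= mul0r subr0. Qed.
Lemma ImZ (q : R) (z : R[i]) : Ic (q%:C * z) = q * Ic z.
Proof. by rewrite ImM /= mul0r addr0. Qed.

Lemma term_eq (x : R) p :
  ((p`!%:R : R[i])^-1) *: (x%:C *: M) ^+ p = ((((p`!%:R : R)^-1 * x ^+ p) : R)%:C) *: M ^+ p.
Proof.
by rewrite exprZn scalerA rmorphM /= rmorphXn fmorphV rmorph_nat.
Qed.

Lemma partial_Re a b (N1 : 'M[R[i]]_(a, n.+1)) (N2 : 'M[R[i]]_(n.+1, b)) x i j N :
  Rc ((N1 *m mexp_partial (x%:C *: M) N *m N2) i j) = pseries (cR N1 N2 i j) x N.
Proof.
rewrite /mexp_partial mulmx_sumr mulmx_suml summxE ReSum /pseries /series /= big_mkord.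
apply: eq_bigr => p _.
rewrite term_eq -scalemxAr -scalemxAl mxE ReZ /cR; ring.
Qed.

Lemma partial_Im a b (N1 : 'M[R[i]]_(a, n.+1)) (N2 : 'M[R[i]]_(n.+1, b)) x i j N :
  Ic ((N1 *m mexp_partial (x%:C *: M) N *m N2) i j) = pseries (cI N1 N2 i j) x N.
Proof.
rewrite /mexp_partial mulmx_sumr mulmx_suml summxE ImSum /pseries /series /= big_mkord.
apply: eq_bigr => p _.
rewrite term_eq -scalemxAr -scalemxAl mxE ImZ /cI; ring.
Qed.

Lemma fact_ge0 p : (0 : R) <= p`!%:R. Proof. by rewrite ler0n. Qed.

Lemma cvg_cR a b (N1 : 'M[R[i]]_(a, n.+1)) (N2 : 'M[R[i]]_(n.+1, b)) i j x :
  cvgn (pseries (cR N1 N2 i j) x).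
Proof.
apply: (@cvg_pseries_bound R _ (mu N1 * mu N2) (mu M)).
- by rewrite mulr_ge0 // mu_ge0.
- exact: mu_ge0.
move=> p; rewrite /cR normrM normfV normr_nat; apply: ler_wpM2r.
  by rewrite invr_ge0 fact_ge0.
apply: le_trans (nu_Re _) _; exact: nu_N1MN2.
Qed.

Lemma cvg_cI a b (N1 : 'M[R[i]]_(a, n.+1)) (N2 : 'M[R[i]]_(n.+1, b)) i j x :
  cvgn (pseries (cI N1 N2 i j) x).
Proof.
apply: (@cvg_pseries_bound R _ (mu N1 * mu N2) (mu M)).
- by rewrite mulr_ge0 // mu_ge0.
- exact: mu_ge0.
move=> p; rewrite /cI normrM normfV normr_nat; apply: ler_wpM2r.
  by rewrite invr_ge0 fact_ge0.
apply: le_trans (nu_Im _) _; exact: nu_N1MN2.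
Qed.

Lemma fact_neq0 p : (p`!%:R : R) != 0. Proof. by rewrite pnatr_eq0 -lt0n fact_gt0. Qed.

Lemma diffs_cR a b (N1 : 'M[R[i]]_(a, n.+1)) (N2 : 'M[R[i]]_(n.+1, b)) i j :
  pseries_diffs (cR N1 N2 i j) = cR (N1 *m M) N2 i j.
Proof.
apply/funext => p; rewrite /pseries_diffs /cR exprS -mulmxE mulmxA factS natrM.
have h1 : (p.+1%:R : R) != 0 by rewrite pnatr_eq0.
have h2 := fact_neq0 p.
by field; rewrite h2 /=; move: h1; rewrite -natr1 addrC.
Qed.

Lemma diffs_cI a b (N1 : 'M[R[i]]_(a, n.+1)) (N2 : 'M[R[i]]_(n.+1, b)) i j :
  pseries_diffs (cI N1 N2 i j) = cI (N1 *m M) N2 i j.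
Proof.
apply/funext => p; rewrite /pseries_diffs /cI exprS -mulmxE mulmxA factS natrM.
have h1 : (p.+1%:R : R) != 0 by rewrite pnatr_eq0.
have h2 := fact_neq0 p.
by field; rewrite h2 /=; move: h1; rewrite -natr1 addrC.
Qed.

Lemma cR_swap i j : cR (1%:M *m M) (1%:M : 'M_n.+1) i j = cR 1%:M M i j.
Proof.
apply/funext => p; rewrite /cR; congr (Rc _ / _).
by rewrite !mul1mx mulmx1 !mulmxE -exprS -exprSr.
Qed.
Lemma cI_swap i j : cI (1%:M *m M) (1%:M : 'M_n.+1) i j = cI 1%:M M i j.
Proof.
apply/funext => p; rewrite /cI; congr (Ic _ / _).
by rewrite !mul1mx mulmx1 !mulmxE -exprS -exprSr.
Qed.

Lemma mexp_lim (x : R) : ecvg (fun N => mexp_partial (x%:C *: M) N) (mexp (x%:C *: M)).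
Proof.
move=> k k'; split.
  have E : (fun N => Rc (mexp_partial (x%:C *: M) N k k')) = pseries (cR 1%:M 1%:M k k') x.
    by apply/funext => N; rewrite -partial_Re mul1mx mulmx1.
  rewrite mxE /= E; exact: cvg_cR.
have E : (fun N => Ic (mexp_partial (x%:C *: M) N k k')) = pseries (cI 1%:M 1%:M k k') x.
  by apply/funext => N; rewrite -partial_Im mul1mx mulmx1.
rewrite mxE /= E; exact: cvg_cI.
Qed.

Lemma limn_cR a b (N1 : 'M[R[i]]_(a, n.+1)) (N2 : 'M[R[i]]_(n.+1, b)) i j x :
  limn (pseries (cR N1 N2 i j) x) = Rc ((N1 *m mexp (x%:C *: M) *m N2) i j).
Proof.
have E : pseries (cR N1 N2 i j) x = (fun N => Rc ((N1 *m mexp_partial (x%:C *: M) N *m N2) i j)).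
  by apply/funext => N; rewrite partial_Re.
rewrite E; apply: cvg_lim; first exact: Rhausdorff.
exact: (ecvg_mulr N2 (ecvg_mull N1 (mexp_lim x)) i j).1.
Qed.

Lemma limn_cI a b (N1 : 'M[R[i]]_(a, n.+1)) (N2 : 'M[R[i]]_(n.+1, b)) i j x :
  limn (pseries (cI N1 N2 i j) x) = Ic ((N1 *m mexp (x%:C *: M) *m N2) i j).
Proof.
have E : pseries (cI N1 N2 i j) x = (fun N => Ic ((N1 *m mexp_partial (x%:C *: M) N *m N2) i j)).
  by apply/funext => N; rewrite partial_Im.
rewrite E; apply: cvg_lim; first exact: Rhausdorff.
exact: (ecvg_mulr N2 (ecvg_mull N1 (mexp_lim x)) i j).2.
Qed.

Lemma mexp_comm (x : R) : M * mexp (x%:C *: M) = mexp (x%:C *: M) * M.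
Proof.
apply/matrixP => i j; rewrite (cplxE ((M * _) i j)) (cplxE ((_ * M) i j)).
have e1 : M * mexp (x%:C *: M) = 1%:M *m M *m mexp (x%:C *: M) *m 1%:M.
  by rewrite mul1mx mulmx1 mulmxE.
have e2 : mexp (x%:C *: M) * M = 1%:M *m mexp (x%:C *: M) *m M.
  by rewrite mul1mx mulmxE.
by rewrite e1 e2 -limn_cR -limn_cI cR_swap cI_swap limn_cR limn_cI.
Qed.

Lemma mexp_der (t : R) : mder (fun s => mexp (s%:C *: M)) t (M * mexp (t%:C *: M)).
Proof.
move=> i j.
have e1 : M * mexp (t%:C *: M) = 1%:M *m M *m mexp (t%:C *: M) *m 1%:M.
  by rewrite mul1mx mulmx1 mulmxE.
have K : `|t| < `|(`|t| + 1)|.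
  by rewrite [X in _ < X]ger0_norm ?addr_ge0 // ltrDl.
split.
  have E : (fun s => Rc (mexp (s%:C *: M) i j)) = (fun s => limn (pseries (cR 1%:M 1%:M i j) s)).
    by apply/funext => s; rewrite limn_cR mul1mx mulmx1.
  rewrite E e1 -limn_cR -diffs_cR.
  apply: pseries_snd_diffs K.
  - exact: cvg_cR.
  - by rewrite diffs_cR; exact: cvg_cR.
  - by rewrite !diffs_cR; exact: cvg_cR.
have E : (fun s => Ic (mexp (s%:C *: M) i j)) = (fun s => limn (pseries (cI 1%:M 1%:M i j) s)).
  by apply/funext => s; rewrite limn_cI mul1mx mulmx1.
rewrite E e1 -limn_cI -diffs_cI.
apply: pseries_snd_diffs K.
- exact: cvg_cI.
- by rewrite diffs_cI; exact: cvg_cI.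
- by rewrite !diffs_cI; exact: cvg_cI.
Qed.
Lemma cR_N (N : 'M[R[i]]_n.+1) (hN : GRing.comm N M) i j :
  cR (1%:M *m N) (1%:M : 'M_n.+1) i j = cR 1%:M N i j.
Proof.
apply/funext => p; rewrite /cR; congr (Rc _ / _).
by rewrite !mul1mx mulmx1 !mulmxE (commrX p hN).
Qed.
Lemma cI_N (N : 'M[R[i]]_n.+1) (hN : GRing.comm N M) i j :
  cI (1%:M *m N) (1%:M : 'M_n.+1) i j = cI 1%:M N i j.
Proof.
apply/funext => p; rewrite /cI; congr (Ic _ / _).
by rewrite !mul1mx mulmx1 !mulmxE (commrX p hN).
Qed.
Lemma mexp_commN (N : 'M[R[i]]_n.+1) (hN : GRing.comm N M) (x : R) :
  N * mexp (x%:C *: M) = mexp (x%:C *: M) * N.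
Proof.
apply/matrixP => i j; rewrite (cplxE ((N * _) i j)) (cplxE ((_ * N) i j)).
have e1 : N * mexp (x%:C *: M) = 1%:M *m N *m mexp (x%:C *: M) *m 1%:M.
  by rewrite mul1mx mulmx1 mulmxE.
have e2 : mexp (x%:C *: M) * N = 1%:M *m mexp (x%:C *: M) *m N.
  by rewrite mul1mx mulmxE.
by rewrite e1 e2 -limn_cR -limn_cI cR_N // cI_N // limn_cR limn_cI.
Qed.

End Mexp.

Local Close Scope classical_set_scope.

Section Zmod.
Variable V : zmodType.
Inductive zexp := Zat of nat | Zadd of zexp & zexp | Zopp of zexp | Z0.
Fixpoint zeval (s : seq V) (e : zexp) : V :=
  match e with
  | Zat i => nth 0 s i
  | Zadd a b => zeval s a + zeval s b
  | Zopp a => - zeval s a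
  | Z0 => 0
  end.
Fixpoint zcoef (e : zexp) (i : nat) : int :=
  match e with
  | Zat j => if j == i then 1 else 0
  | Zadd a b => zcoef a i + zcoef b i
  | Zopp a => - zcoef a i
  | Z0 => 0
  end.
Lemma zeval_coef s e : zeval s e = \sum_(i < size s) nth 0 s i *~ zcoef e i.
Proof.
elim: e => [j|a IHa b IHb|a IHa|] /=.
- case: (ltnP j (size s)) => hj.
    rewrite (bigD1 (Ordinal hj)) //= eqxx mulr1z big1 ?addr0 // => i /eqP ne.
    case: eqP => [e|]; last by rewrite mulr0z.
    by case: ne; apply/val_inj.
  rewrite nth_default // big1 // => i _; case: eqP => [e|]; last by rewrite mulr0z.
  by move: (ltn_ord i); rewrite -e ltnNge hj.
- by rewrite IHa IHb -big_split /=; apply: eq_bigr => i _; rewrite mulrzDr.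
- by rewrite IHa -sumrN; apply: eq_bigr => i _; rewrite mulrNz.
- by rewrite big1 // => i _; rewrite mulr0z.
Qed.
Definition zcheck (n : nat) (e1 e2 : zexp) := all (fun i => zcoef e1 i == zcoef e2 i) (iota 0 n).
Lemma zcheck_sound s e1 e2 : zcheck (size s) e1 e2 -> zeval s e1 = zeval s e2.
Proof.
move=> /allP H; rewrite !zeval_coef; apply: eq_bigr => i _.
have := H i; rewrite mem_iota add0n ltn_ord => /(_ isT) /eqP -> //.
Qed.
End Zmod.

Ltac zfind x l n :=
  lazymatch l with
  | nil => constr:(@None nat)
  | cons ?y ?l' =>
      match constr:(tt) with
      | _ => let _ := constr:(@erefl _ x : x = y) in constr:(Some n)
      | _ => zfind x l' (S n)
      end
  end.

Ltac zreify V t l :=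
  match t with
  | @GRing.add _ ?a ?b =>
      let r1 := zreify V a l in
      match r1 with (?e1, ?l1) =>
        let r2 := zreify V b l1 in
        match r2 with (?e2, ?l2) => constr:((Zadd e1 e2, l2)) end end
  | @GRing.opp _ ?a =>
      let r1 := zreify V a l in
      match r1 with (?e1, ?l1) => constr:((Zopp e1, l1)) end
  | @GRing.zero _ => constr:((@Z0, l))
  | _ =>
      let o := zfind t l 0%N in
      match o with
      | Some ?i => constr:((Zat i, l))
      | None => let n := eval cbn [size] in (size l) in
                let l' := eval cbn [cat] in (l ++ [:: (t : V)]) in
                constr:((Zat n, l'))
      end
  end.

Ltac ztac :=
  match goal with
  | |- @eq ?V ?a ?b =>
      let r1 := zreify V a (@nil V) in
      match r1 with (?e1, ?l1) =>
        let r2 := zreify V b l1 in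
        match r2 with (?e2, ?l2) =>
          change (zeval l2 e1 = zeval l2 e2); apply: zcheck_sound; vm_compute; reflexivity
        end end
  end.

Section Test.
Variable R : realType.
Variables (a b c d : 'M[R[i]]_(2,3)).
Goal a + (b - c) + - (a - d) = b + d - c.
Proof. ztac. Qed.
End Test.

Section Isum.
Variable V : zmodType.

Lemma tel_nat (h : nat -> V) (N : nat) : \sum_(i < N) (h i.+1 - h i) = h N - h 0%N.
Proof.
elim: N => [|N IH]; first by rewrite big_ord0 subrr.
by rewrite big_ord_recr /= IH addrC addrA subrK.
Qed.

Lemma isum_tel (g : int -> V) (c : V) (a b : int) :
  isum a b (fun i => g (i + 1) - g i + c) = g b - g a + c *~ (b - a).
Proof.
rewrite /isum; case: ifP => hab.
- have hN : (`|b - a|%N : int) = b - a by rewrite gez0_abs // subr_ge0.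
  rewrite big_split /= sumr_const card_ord.
  have -> : \sum_(i < `|b - a|%N) (g (a + i%:Z + 1) - g (a + i%:Z))
          = \sum_(i < `|b - a|%N) (g (a + (i.+1)%:Z) - g (a + i%:Z)).
    by apply: eq_bigr => i _; rewrite intS [1 + _]addrC addrA.
  have T := tel_nat (fun i : nat => g (a + i%:Z)) `|b - a|%N; rewrite /= in T; rewrite T.
  by rewrite addr0 hN subrKC -hN; congr (_ + _).
- have hN : (`|b - a|%N : int) = a - b by rewrite ltz0_abs ?opprB // subr_lt0 ltNge hab.
  rewrite big_split /= sumr_const card_ord.
  have -> : \sum_(i < `|b - a|%N) (g (b + i%:Z + 1) - g (b + i%:Z))
          = \sum_(i < `|b - a|%N) (g (b + (i.+1)%:Z) - g (b + i%:Z)).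
    by apply: eq_bigr => i _; rewrite intS [1 + _]addrC addrA.
  have T := tel_nat (fun i : nat => g (b + i%:Z)) `|b - a|%N; rewrite /= in T; rewrite T.
  rewrite addr0 hN subrKC.
  rewrite -[b - a]opprB -hN mulrNz -pmulrn opprD opprB.
  by rewrite abszN absz_nat.
Qed.
End Isum.

Lemma zuse (V : zmodType) (a b L R : V) : a = b -> L + (b - a) = R -> L = R.
Proof. by move=> ->; rewrite subrr addr0. Qed.

Ltac mexpand := rewrite ?(mulmxDl, mulmxDr, mulmxBl, mulmxBr, mulmxN, mulNmx, mul1mx, mulmx1, mulmx0, mul0mx); rewrite ?mulmxA.

Section Alg.
Variables (F : fieldType) (m n : nat) (k l : int).
Variables (th : int -> 'M[F]_(m, n.+1)) (et : int -> 'M[F]_(n.+1, m)) (Om : int -> 'M[F]_n.+1)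
  (P Q : 'M[F]_n.+1) (ga : 'M[F]_n.+1).
Hypothesis HU : forall j : int, Om j \in unitmx.
Hypothesis F1 : forall j : int, Om (j + l) = Om j + et j *m th j.
Hypothesis R2 : forall j J : int, J + l = j + k -> th (J + l) + th J = - (th j *m P).
Hypothesis R3 : forall a J : int, J + l = a + k -> et (a - l) + et a = - (Q *m et J).
Hypothesis HK : forall j J : int, J + l = j + k -> Q *m Om J - Om j *m P = et (j - l) *m th J.

Local Notation Oi j := (invmx (Om j)).

Lemma L1a (j : int) : Oi (j + l) *m et j *m th j *m Oi j = Oi j - Oi (j + l).
Proof.
have e : et j *m th j = Om (j + l) - Om j by rewrite F1 addrC addKr.
rewrite -[Oi (j + l) *m et j *m th j]mulmxA e mulmxBr mulmxBl mulVmx ?HU // mul1mx.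
by rewrite -mulmxA mulmxV ?HU // mulmx1.
Qed.

Lemma OiOm (j : int) b (A : 'M[F]_(n.+1, b)) : Oi j *m (Om j *m A) = A.
Proof. by rewrite mulmxA mulVmx ?HU // mul1mx. Qed.
Lemma OmOi (j : int) a (A : 'M[F]_(a, n.+1)) : A *m Oi j *m Om j = A.
Proof. by rewrite -mulmxA mulVmx ?HU // mulmx1. Qed.
Lemma OmOi' (j : int) a (A : 'M[F]_(a, n.+1)) : A *m Om j *m Oi j = A.
Proof. by rewrite -mulmxA mulmxV ?HU // mulmx1. Qed.

Lemma Iq (j J : int) (hJ : J + l = j + k) :
  th (J + l) *m Oi (J + l) + (th (J + l) *m Oi (J + l) *m et J - th j *m Oi j *m et (j - l) + 1%:M) *m (th J *m Oi J)
  = - (th j *m Oi j *m Q).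
Proof.
have e1 : th (J + l) *m Oi (J + l) *m et J *m th J *m Oi J = th (J + l) *m Oi J - th (J + l) *m Oi (J + l).
  by rewrite -mulmxBr -L1a !mulmxA.
have eK : th j *m Oi j *m (Q *m Om J) *m Oi J = th j *m Oi j *m (et (j - l) *m th J + Om j *m P) *m Oi J.
  by rewrite -(HK hJ) subrK.
rewrite mulmxA OmOi' in eK.
have e2 : th j *m Oi j *m (Om j *m P) *m Oi J = th j *m P *m Oi J by rewrite -[th j *m Oi j *m _]mulmxA OiOm.
have e3 := R2 hJ.
have e3' : (th (J + l) + th J) *m Oi J = - (th j *m P) *m Oi J by rewrite e3.
apply: (zuse e1); apply: (zuse eK); apply: (zuse e2); apply: (zuse e3').
mexpand; ztac.
Qed.

Lemma Ir (j J : int) (hJ : J + l = j + k) :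
  Oi j *m et (j - l) + Oi (j + l) *m et j *m (th (j + k) *m Oi (j + k) *m et J - th j *m Oi j *m et (j - l) + 1%:M)
  + P *m (Oi (j + k) *m et J) = 0.
Proof.
have e1 : Oi (j + l) *m et j *m th j *m Oi j *m et (j - l) = Oi j *m et (j - l) - Oi (j + l) *m et (j - l).
  by rewrite -mulmxBl -L1a.
have hK : (j + k) + l = (j + l) + k by rewrite addrAC.
have eK := HK hK; rewrite addrK in eK.
have eK' : Oi (j + l) *m (Q *m Om (j + k)) *m Oi (j + k) *m et J
   = Oi (j + l) *m (et j *m th (j + k) + Om (j + l) *m P) *m Oi (j + k) *m et J.
  by rewrite -eK subrK.
rewrite mulmxA OmOi' in eK'.
have e2 : Oi (j + l) *m Om (j + l) *m P *m Oi (j + k) *m et J = P *m Oi (j + k) *m et J.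
  by rewrite mulVmx ?HU // mul1mx.
have e3 := R3 hJ.
have e3' : Oi (j + l) *m (et (j - l) + et j) = Oi (j + l) *m (- (Q *m et J)) by rewrite e3.
apply: (zuse (esym e1)); apply: (zuse e3'); apply: (zuse (esym eK')); apply: (zuse (esym e2)).
mexpand; ztac.
Qed.

Lemma Eqq (j J : int) (hJ : J + l = j + k) (G : Q *m ga = ga *m P) :
  - (th (j + k) *m Oi (j + k) *m ga)
  = - ((th (j + k) *m Oi (j + k) *m et J - th j *m Oi j *m et (j - l) + 1%:M) *m (- (th J *m Oi J *m ga)))
    - (- (th j *m Oi j *m ga)) *m P.
Proof.
have e := Iq hJ; rewrite hJ in e.
have e' : (th (j + k) *m Oi (j + k) + (th (j + k) *m Oi (j + k) *m et J - th j *m Oi j *m et (j - l) + 1%:M) *m (th J *m Oi J)) *m ga = - (th j *m Oi j *m Q) *m ga by rewrite e.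
have eG : th j *m Oi j *m (Q *m ga) = th j *m Oi j *m (ga *m P) by rewrite G.
apply: (zuse (esym e')); apply: (zuse eG).
mexpand; ztac.
Qed.

Lemma Eqr (j J : int) (hJ : J + l = j + k) :
  - (Oi j *m et (j - l))
  = - (- (Oi (j + l) *m et j) *m (th (j + k) *m Oi (j + k) *m et J - th j *m Oi j *m et (j - l) + 1%:M))
    - P *m (- (Oi (j + k) *m et J)).
Proof.
have e := Ir hJ.
apply: (zuse (esym e)).
mexpand; ztac.
Qed.

Lemma Eq1 (j J : int) (hJ : J + l = j + k) :
  let u x := th x *m Oi x *m et (x - l) in
  let D x := th (x + l) *m Oi x *m et (x - l) - th x *m Oi x *m et (x - l) *m th x *m Oi x *m et (x - l)
      + th x *m Oi x *m ga *m Oi x *m et (x - l) - th x *m Oi x *m et (x - l - l) in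
  (D (j + k) - D j) + (u (j + k) - u j + 1%:M) *m (u (J + l) - u J) - (u (j + l) - u j) *m (u (j + k) - u j + 1%:M)
   = (- (th (j + k) *m Oi (j + k) *m ga)) *m (- (Oi (j + k) *m et J))
     - (- (th j *m Oi j *m ga)) *m (- (Oi j *m et (j - l))).
Proof.
move=> u D; rewrite /u /D; clear u D; rewrite hJ.
have eJ : j + k - l = J by rewrite -hJ addrK.
rewrite eJ addrK.
have e1 := Iq hJ; rewrite hJ in e1.
have e1' : (th (j + k) *m Oi (j + k) + (th (j + k) *m Oi (j + k) *m et J - th j *m Oi j *m et (j - l) + 1%:M) *m (th J *m Oi J)) *m et (J - l) = - (th j *m Oi j *m Q) *m et (J - l) by rewrite e1.
have e2 := Ir hJ.
have e2' : th (j + l) *m (Oi j *m et (j - l) + Oi (j + l) *m et j *m (th (j + k) *m Oi (j + k) *m et J - th j *m Oi j *m et (j - l) + 1%:M) + P *m (Oi (j + k) *m et J)) = th (j + l) *m 0 by rewrite e2.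
have h3 : (j + k) + l = (j + l) + k by rewrite addrAC.
have e3 := R2 h3.
have e3' : (th (j + k + l) + th (j + k)) *m (Oi (j + k) *m et J) = - (th (j + l) *m P) *m (Oi (j + k) *m et J) by rewrite e3.
have h4 : (J - l) + l = (j - l) + k by rewrite subrK addrAC -hJ addrK.
have e4 := R3 h4.
have e4' : th j *m Oi j *m (et (j - l - l) + et (j - l)) = th j *m Oi j *m (- (Q *m et (J - l))) by rewrite e4.
apply: (zuse (esym e1')); apply: (zuse (esym e2')); apply: (zuse e3'); apply: (zuse e4').
mexpand; ztac.
Qed.

End Alg.

Ltac zu e := (apply: (zuse e) + apply: (zuse (esym e))).

Section Term.
Variables (F : fieldType) (n m : nat) (k l : int).
Variables (L Lt X E Et : 'M[F]_n.+1) (A : 'M[F]_(m, n.+1)) (B : 'M[F]_(n.+1, m)).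
Hypothesis uL : L \is a GRing.unit.
Hypothesis uLt : Lt \is a GRing.unit.
Hypothesis cE : GRing.comm E L.
Hypothesis cEt : GRing.comm Et Lt.
Hypothesis hX : Lt ^ (- l) * X * L ^ l - X = B *m A.

Lemma cEz (a : int) : E * L ^ a = L ^ a * E.
Proof. exact: commrXz. Qed.
Lemma cEtz (a : int) : Et * Lt ^ a = Lt ^ a * Et.
Proof. exact: commrXz. Qed.

Definition tau (a b : int) := Et * Lt ^ (- a) * X * E * L ^ b.

Lemma T1 (a b : int) : tau (a + l) (b + l) - tau a b = (Et * Lt ^ (- a)) *m B *m (A *m (E * L ^ b)).
Proof.
rewrite /tau.
have eLt : Lt ^ (- (a + l)) = Lt ^ (- a) * Lt ^ (- l) by rewrite -exprzDr // opprD.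
have eL : L ^ (b + l) = L ^ l * L ^ b by rewrite -exprzDr // addrC.
rewrite eLt eL.
have e1 : Et * (Lt ^ (- a) * Lt ^ (- l)) * X * E * (L ^ l * L ^ b) = Et * Lt ^ (- a) * (Lt ^ (- l) * X * L ^ l) * E * L ^ b.
  rewrite !mulrA; congr (_ * _); rewrite -!mulrA; congr (_ * (_ * (_ * (_ * _)))).
  by rewrite cEz.
rewrite e1 -!mulrBl -mulrBr hX.
by rewrite -!mulmxE !mulmxA.
Qed.

Lemma Tk (P Q : 'M[F]_n.+1) (hQ : Q = - (Lt ^ k + Lt ^ (k - l))) (hP : P = - (L ^ k + L ^ (k - l)))
  (j J : int) (hJ : J + l = j + k) :
  Q * tau J J - tau j j * P = (Et * Lt ^ (- (j - l))) *m B *m (A *m (E * L ^ J)).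
Proof.
have e3 := T1 (j - l) J; rewrite subrK in e3.
rewrite -e3 /tau hQ hP.
have eJ : J = j + k - l by rewrite -hJ addrK.
have f1 : Lt ^ k * Et * Lt ^ (- J) = Et * Lt ^ (- (j - l)).
  rewrite -cEtz -mulrA -exprzDr //; congr (_ * (_ ^ _)).
  rewrite eJ; ring.
have f2 : Lt ^ (k - l) * Et * Lt ^ (- J) = Et * Lt ^ (- j).
  rewrite -cEtz -mulrA -exprzDr //; congr (_ * (_ ^ _)).
  rewrite eJ; ring.
have f3 : L ^ j * L ^ k = L ^ (J + l) by rewrite -exprzDr // hJ.
have f4 : L ^ j * L ^ (k - l) = L ^ J by rewrite -exprzDr // eJ; congr (_ ^ _); ring.
have g1 : Lt ^ k * Et * Lt ^ (- J) * X * E * L ^ J = Et * Lt ^ (- (j - l)) * X * E * L ^ J by rewrite f1.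
have g2 : Lt ^ (k - l) * Et * Lt ^ (- J) * X * E * L ^ J = Et * Lt ^ (- j) * X * E * L ^ J by rewrite f2.
have g3 : Et * Lt ^ (- j) * X * E * (L ^ j * L ^ k) = Et * Lt ^ (- j) * X * E * L ^ (J + l) by rewrite f3.
have g4 : Et * Lt ^ (- j) * X * E * (L ^ j * L ^ (k - l)) = Et * Lt ^ (- j) * X * E * L ^ J by rewrite f4.
move: g1 g2 g3 g4; rewrite -!mulmxE => g1 g2 g3 g4.
zu g1; zu g2; zu g3; zu g4; mexpand; ztac.
Qed.
Lemma Tth (P : 'M[F]_n.+1) (hP : P = - (L ^ k + L ^ (k - l))) (j J : int) (hJ : J + l = j + k) :
  A *m (E * L ^ (J + l)) + A *m (E * L ^ J) = - (A *m (E * L ^ j) *m P).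
Proof.
have eJ : J = j + k - l by rewrite -hJ addrK.
have f3 : L ^ j * L ^ k = L ^ (J + l) by rewrite -exprzDr // hJ.
have f4 : L ^ j * L ^ (k - l) = L ^ J by rewrite -exprzDr // eJ; congr (_ ^ _); ring.
rewrite -f3 -f4 hP -!mulmxE; mexpand; ztac.
Qed.

Lemma Tet (Q : 'M[F]_n.+1) (hQ : Q = - (Lt ^ k + Lt ^ (k - l))) (a J : int) (hJ : J + l = a + k) :
  (Et * Lt ^ (- (a - l))) *m B + (Et * Lt ^ (- a)) *m B = - (Q *m ((Et * Lt ^ (- J)) *m B)).
Proof.
have eJ : J = a + k - l by rewrite -hJ addrK.
have f1 : Lt ^ k * Et * Lt ^ (- J) = Et * Lt ^ (- (a - l)).
  rewrite -cEtz -mulrA -exprzDr //; congr (_ * (_ ^ _)).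
  rewrite eJ; ring.
have f2 : Lt ^ (k - l) * Et * Lt ^ (- J) = Et * Lt ^ (- a).
  rewrite -cEtz -mulrA -exprzDr //; congr (_ * (_ ^ _)).
  rewrite eJ; ring.
rewrite -f1 -f2 hQ -!mulmxE; mexpand; ztac.
Qed.

Lemma Dth (b : int) : L ^ l * E * L ^ b = E * L ^ (b + l).
Proof. by rewrite -cEz -mulrA -exprzDr // addrC. Qed.

Lemma Det (a : int) : Lt ^ l * Et * Lt ^ (- a) = Et * Lt ^ (- (a - l)).
Proof. by rewrite -cEtz -mulrA -exprzDr // opprB addrC. Qed.

Lemma Dtau (a b : int) :
  - (Lt ^ l * Et) * Lt ^ (- a) * X * E * L ^ b + Et * Lt ^ (- a) * X * (L ^ l * E) * L ^ b
  = (Et * Lt ^ (- (a - l))) *m B *m (A *m (E * L ^ b)).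
Proof.
have e := T1 (a - l) b; rewrite subrK in e; rewrite -e /tau.
have f1 : Lt ^ l * Et * Lt ^ (- a) * X * E * L ^ b = Et * Lt ^ (- (a - l)) * X * E * L ^ b by rewrite Det.
have f2 : Et * Lt ^ (- a) * X * (L ^ l * E * L ^ b) = Et * Lt ^ (- a) * X * (E * L ^ (b + l)) by rewrite Dth.
move: f1 f2; rewrite -!mulmxE => f1 f2.
zu f1; zu f2; mexpand; ztac.
Qed.

End Term.

Opaque mexp.
Section Main.
Variables (R : realType) (m n : nat) (k l : int).
Hypothesis (hk : (0 < k)%R).
Variables (P Q : 'M[R[i]]_n.+1) (RP RQ : seq 'M[R[i]]_n.+1).
Hypothesis (hRP : forall L, L \in RP -> L \in unitmx /\ - (L ^ k + L ^ (k - l)) = P).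
Hypothesis (hRQ : forall L, L \in RQ -> L \in unitmx /\ - (L ^ k + L ^ (k - l)) = Q).
Variables (A : 'M[R[i]]_n.+1 -> 'M[R[i]]_(m.+1, n.+1)) (B : 'M[R[i]]_n.+1 -> 'M[R[i]]_(n.+1, m.+1))
  (X : 'M[R[i]]_n.+1 -> 'M[R[i]]_n.+1 -> 'M[R[i]]_n.+1).
Hypothesis (hX : forall Lt L, Lt \in RQ -> L \in RP ->
          Lt ^ (- l) * X Lt L * L ^ l - X Lt L = B Lt *m A L).
Variable (om : R -> 'M[R[i]]_n.+1).
Hypothesis (hom_d : forall t, mderivable om t).
Hypothesis (hom_c : forall t, Q * om t = om t * P).
Variable (gamma2 : R -> 'M[R[i]]_n.+1).
Hypothesis (hgamma2 : forall t, gamma2 t = - mderive om t).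
Variable (theta : R -> int -> 'M[R[i]]_(m.+1, n.+1)).
Hypothesis (htheta : forall t j, theta t j =
     \sum_(L <- RP) (A L *m (mexp ((t%:C) *: L ^ l) * L ^ j))).
Variable (eta : R -> int -> 'M[R[i]]_(n.+1, m.+1)).
Hypothesis (heta : forall t j, eta t j =
     \sum_(Lt <- RQ) ((mexp ((- t)%:C *: Lt ^ l) * Lt ^ (- j)) *m B Lt)).
Variable (Om : R -> int -> 'M[R[i]]_n.+1).
Hypothesis (hOm : forall t j, Om t j =
     \sum_(L <- RP) \sum_(Lt <- RQ)
        (mexp ((- t)%:C *: Lt ^ l) * Lt ^ (- j) * X Lt L
           * mexp ((t%:C) *: L ^ l) * L ^ j)
     + om t).
Hypothesis (hOm_inv : forall t j, Om t j \in unitmx).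

Local Notation E L s := (mexp ((s%:C) *: L ^ l)).
Local Notation Et Lt s := (mexp ((- s)%:C *: Lt ^ l)).

Lemma cE (L : 'M[R[i]]_n.+1) (s : R) : GRing.comm (E L s) L.
Proof.
have h : GRing.comm L (L ^ l) by apply: commrXz.
by rewrite /GRing.comm (mexp_commN h).
Qed.
Lemma cEt (Lt : 'M[R[i]]_n.+1) (s : R) : GRing.comm (Et Lt s) Lt.
Proof.
have h : GRing.comm Lt (Lt ^ l) by apply: commrXz.
by rewrite /GRing.comm (mexp_commN h).
Qed.

Section AtT.
Variable t : R.

Lemma uRP L : L \in RP -> L \is a GRing.unit. Proof. by case/hRP. Qed.
Lemma uRQ L : L \in RQ -> L \is a GRing.unit. Proof. by case/hRQ. Qed.
Lemma PRP L : L \in RP -> P = - (L ^ k + L ^ (k - l)). Proof. by case/hRP => _ ->. Qed.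
Lemma QRQ L : L \in RQ -> Q = - (L ^ k + L ^ (k - l)). Proof. by case/hRQ => _ ->. Qed.

Lemma F1 (j : int) : Om t (j + l) = Om t j + eta t j *m theta t j.
Proof.
have key : \sum_(L <- RP) \sum_(Lt <- RQ)
        (Et Lt t * Lt ^ (- (j + l)) * X Lt L * E L t * L ^ (j + l))
   - \sum_(L <- RP) \sum_(Lt <- RQ) (Et Lt t * Lt ^ (- j) * X Lt L * E L t * L ^ j)
   = eta t j *m theta t j.
  rewrite heta htheta mulmx_suml.
  under [in RHS]eq_bigr => i _ do rewrite mulmx_sumr.
  rewrite [in RHS]exchange_big -sumrB big_seq [in RHS]big_seq; apply: eq_bigr => L hL.
  rewrite -sumrB big_seq [in RHS]big_seq; apply: eq_bigr => Lt hLt.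
  have := T1 (Et Lt t) (uRP hL) (uRQ hLt) (cE L t) (hX hLt hL) j j.
  by rewrite /tau.
rewrite !hOm -key; ztac.
Qed.

Lemma R2 (j J : int) : J + l = j + k -> theta t (J + l) + theta t J = - (theta t j *m P).
Proof.
move=> hJ; rewrite !htheta -big_split mulmx_suml -sumrN big_seq [in RHS]big_seq.
apply: eq_bigr => L hL; exact: (Tth (E L t) (A L) (uRP hL) (PRP hL) hJ).
Qed.

Lemma R3 (a J : int) : J + l = a + k -> eta t (a - l) + eta t a = - (Q *m eta t J).
Proof.
move=> hJ; rewrite !heta -big_split mulmx_sumr -sumrN big_seq [in RHS]big_seq.
apply: eq_bigr => Lt hLt; exact: (Tet (B Lt) (uRQ hLt) (cEt Lt t) (QRQ hLt) hJ).
Qed.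

Lemma HK (j J : int) : J + l = j + k -> Q *m Om t J - Om t j *m P = eta t (j - l) *m theta t J.
Proof.
move=> hJ.
have key : Q *m (\sum_(L <- RP) \sum_(Lt <- RQ)
        (Et Lt t * Lt ^ (- J) * X Lt L * E L t * L ^ J))
   - (\sum_(L <- RP) \sum_(Lt <- RQ) (Et Lt t * Lt ^ (- j) * X Lt L * E L t * L ^ j)) *m P
   = eta t (j - l) *m theta t J.
  rewrite heta htheta mulmx_suml mulmx_sumr [X in _ - X]mulmx_suml.
  under [in RHS]eq_bigr => i _ do rewrite mulmx_sumr.
  rewrite [in RHS]exchange_big -sumrB big_seq [in RHS]big_seq; apply: eq_bigr => L hL.
  rewrite mulmx_sumr mulmx_suml -sumrB big_seq [in RHS]big_seq; apply: eq_bigr => Lt hLt.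
  have := Tk (uRP hL) (uRQ hLt) (cE L t) (cEt Lt t) (hX hLt hL) (QRQ hLt) (PRP hL) hJ.
  by rewrite /tau.
have e1 : Q *m om t = om t *m P := hom_c t.
rewrite !hOm mulmxDr mulmxDl -key.
apply: (zuse e1); ztac.
Qed.

Lemma G : Q *m gamma2 t = gamma2 t *m P.
Proof.
rewrite hgamma2 mulmxN mulNmx; congr (- _).
have h1 := mder_mderive (mder_mul (mder_cst Q t) (mderivable_mder (hom_d t))).
have h2 := mder_mderive (mder_mul (mderivable_mder (hom_d t)) (mder_cst P t)).
have e : (fun s => Q *m om s) = (fun s => om s *m P) by apply/funext => s; exact: hom_c.
rewrite e in h1.
by move: h1.2; rewrite h2.2 mul0mx mulmx0 add0r addr0 => ->.
Qed.

Lemma dE (L : 'M[R[i]]_n.+1) : mder (fun s => E L s) t (L ^ l * E L t).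
Proof. exact: mexp_der. Qed.

Lemma dEt (Lt : 'M[R[i]]_n.+1) : mder (fun s => Et Lt s) t (- (Lt ^ l) * Et Lt t).
Proof.
have e : forall s : R, (- s)%:C *: Lt ^ l = s%:C *: (- (Lt ^ l)).
  by move=> s; rewrite raddfN /= scaleNr scalerN.
have h := mexp_der (- (Lt ^ l)) t.
rewrite -e in h.
by apply: mder_ext h => s; rewrite e.
Qed.

Lemma dth (b : int) : mder (fun s => theta s b) t (theta t (b + l)).
Proof.
apply: (mder_ext (fun s => esym (htheta s b))).
have h := @mder_sum R _ RP xpredT _ _ (fun L s => A L *m (E L s * L ^ b)) t
   (fun L => A L *m (L ^ l * E L t *m L ^ b))
   (fun L _ => mder_mulcl (A L) (mder_mulcr (L ^ b) (dE L))).
apply: mder_val h.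
rewrite htheta big_seq [in RHS]big_seq; apply: eq_bigr => L hL.
by rewrite -(Dth l (uRP hL) (cE L t)).
Qed.

Lemma det' (a : int) : mder (fun s => eta s a) t (- eta t (a - l)).
Proof.
apply: (mder_ext (fun s => esym (heta s a))).
have h := @mder_sum R _ RQ xpredT _ _ (fun Lt s => (Et Lt s * Lt ^ (- a)) *m B Lt) t
   (fun Lt => (- (Lt ^ l) * Et Lt t *m Lt ^ (- a)) *m B Lt)
   (fun Lt _ => mder_mulcr (B Lt) (mder_mulcr (Lt ^ (- a)) (dEt Lt))).
apply: mder_val h.
rewrite heta -sumrN big_seq [in RHS]big_seq; apply: eq_bigr => Lt hLt.
by rewrite -(Det l (uRQ hLt) (cEt Lt t)) -mulmxE !mulNmx.
Qed.

Lemma dOm (j : int) : mder (fun s => Om s j) t (eta t (j - l) *m theta t j - gamma2 t).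
Proof.
apply: (mder_ext (fun s => esym (hOm s j))).
have hS : forall L, mder (fun s => \sum_(Lt <- RQ) (Et Lt s * Lt ^ (- j) * X Lt L * E L s * L ^ j)) t
    (\sum_(Lt <- RQ) ((- (Lt ^ l) * Et Lt t *m Lt ^ (- j) *m X Lt L) *m E L t
       + (Et Lt t *m Lt ^ (- j) *m X Lt L) *m (L ^ l * E L t)) *m L ^ j).
  move=> L; exact: (@mder_sum R _ RQ xpredT _ _ (fun Lt s => Et Lt s * Lt ^ (- j) * X Lt L * E L s * L ^ j) t _
     (fun Lt _ => mder_mulcr (L ^ j) (mder_mul (mder_mulcr (X Lt L) (mder_mulcr (Lt ^ (- j)) (dEt Lt))) (dE L)))).
have h := mder_add (@mder_sum R _ RP xpredT _ _ _ t _ (fun L _ => hS L)) (mderivable_mder (hom_d t)).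
apply: mder_val h.
rewrite hgamma2 opprK; congr (_ + _).
rewrite heta htheta mulmx_suml.
under [in RHS]eq_bigr => i _ do rewrite mulmx_sumr.
rewrite [in RHS]exchange_big big_seq [in RHS]big_seq; apply: eq_bigr => L hL.
rewrite big_seq [in RHS]big_seq; apply: eq_bigr => Lt hLt.
have := (Dtau (uRP hL) (uRQ hLt) (cE L t) (cEt Lt t) (hX hLt hL) j j).
move=> hD; rewrite -hD.
move: (Et Lt t) (E L t) (Lt ^ (- j)) (X Lt L) (L ^ j) (Lt ^ l) (L ^ l) => a b c d e f g.
by rewrite -!mulmxE [in LHS]mulNmx mulmxDl.
Qed.

End AtT.



Variable (phi0 : 'M[R[i]]_m.+1) (phi : R -> int -> 'M[R[i]]_m.+1).
Hypothesis (hphi : forall t j, phi t j = phi0 + theta t j *m (Om t j)^-1 *m eta t (j + - l)).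

Lemma dphi (t : R) (x : int) : mder (fun s => phi s x) t
  (theta t (x + l) *m (Om t x)^-1 *m eta t (x - l)
   - theta t x *m (Om t x)^-1 *m eta t (x - l) *m theta t x *m (Om t x)^-1 *m eta t (x - l)
   + theta t x *m (Om t x)^-1 *m gamma2 t *m (Om t x)^-1 *m eta t (x - l)
   - theta t x *m (Om t x)^-1 *m eta t (x - l - l)).
Proof.
apply: (mder_ext (fun s => esym (hphi s x))).
have h := mder_addcl phi0 (mder_mul (mder_mul (dth t x) (mder_inv (dOm t x) (fun s => hOm_inv s x))) (det' t (x - l))).
apply: mder_val h.
move: (theta t (x + l)) (theta t x) ((Om t x)^-1) (eta t (x - l)) (eta t (x - l - l)) (gamma2 t) => a b c d e f.
rewrite -!mulmxE; mexpand; ztac.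
Qed.

Variable (qh : R -> int -> 'M[R[i]]_(m.+1, n.+1)).
Hypothesis (hqh : forall t j, qh t j = - (theta t j *m (Om t j)^-1 *m gamma2 t)).
Variable (rt : R -> int -> 'M[R[i]]_(n.+1, m.+1)).
Hypothesis (hrt : forall t j, rt t j = - ((Om t (j + l))^-1 *m eta t j)).
Variable (W : R -> int -> 'M[R[i]]_m.+1).
Hypothesis (hW : forall t j, W t j = phi t (j + 1) - phi t j + (k%:~R)^-1%:M).

Lemma addKB (V : zmodType) (z x y : V) : (z + x) - (z + y) = x - y.
Proof. by rewrite opprD addrACA subrr add0r. Qed.

Lemma hJ (j : int) : j + (k - l) + l = j + k. Proof. by rewrite -addrA subrK. Qed.
Lemma eJ (j : int) : j + k + - l = j + (k - l). Proof. by rewrite addrA. Qed.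

Lemma conj1 t j :
     mderivable (fun s => phi s (j + k) - phi s j) t /\
     mderive (fun s => phi s (j + k) - phi s j) t
       + (phi t (j + k) - phi t j + 1)
           * (phi t (j + (k - l) + l) - phi t (j + (k - l)))
       - (phi t (j + l) - phi t j) * (phi t (j + k) - phi t j + 1)
     = qh t (j + k) *m rt t (j + k + - l) - qh t j *m rt t (j + - l).
Proof.
have [h1 h2] := mder_mderive (mder_sub (dphi t (j + k)) (dphi t j)).
split => //; rewrite h2.
have i1 : j + k + - l + l = j + k by rewrite subrK.
have i2 : j + - l + l = j by rewrite subrK.
rewrite !hphi. rewrite !hqh !hrt. rewrite !(addKB phi0). rewrite i1 i2 eJ.
have E := Eq1 (gamma2 t) (hOm_inv t) (F1 t) (R2 t) (R3 t) (HK t) (hJ j).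
rewrite /= eJ in E.
have e1 : (1 : 'M[R[i]]_m.+1) = 1%:M := erefl.
rewrite e1 -!mulmxE.
exact E.
Qed.

Lemma conj2 t j :
  qh t (j + k) = - ((phi t (j + k) - phi t j + 1) *m qh t (j + (k - l))) - qh t j *m P.
Proof.
rewrite !hqh !hphi addKB eJ.
exact: (Eqq (hOm_inv t) (F1 t) (R2 t) (HK t) (hJ j) (G t)).
Qed.

Lemma conj3 t j :
  rt t (j + - l) = - (rt t j *m (phi t (j + k) - phi t j + 1)) - P *m rt t (j + (k - l)).
Proof.
rewrite !hrt !hphi addKB subrK hJ eJ.
exact: (Eqr (hOm_inv t) (F1 t) (R3 t) (HK t) (hJ j)).
Qed.

Let c := ((k%:~R : R[i])^-1)%:M : 'M[R[i]]_m.+1.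

Lemma ck : c *~ k = 1.
Proof.
rewrite /c -raddfMz /= -mulrzr mulVf //.
by rewrite intr_eq0 gt_eqF.
Qed.

Lemma IW s j a b : isum a b (fun i => W s (j + i)) = phi s (j + b) - phi s (j + a) + c *~ (b - a).
Proof.
have -> : (fun i => W s (j + i)) = (fun i => (fun x => phi s (j + x)) (i + 1) - (fun x => phi s (j + x)) i + c).
  by apply/funext => i; rewrite hW addrA.
exact: isum_tel.
Qed.

Lemma IWk s j : isum 0 k (fun i => W s (j + i)) = phi s (j + k) - phi s j + 1.
Proof. by rewrite IW addr0 subr0 ck. Qed.

Lemma cc (Y : 'M[R[i]]_m.+1) : Y * (c *~ l) = (c *~ l) * Y.
Proof.
have h : GRing.comm Y c by rewrite /GRing.comm /c -!mulmxE scalar_mxC.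
exact: commrMz.
Qed.

Lemma conj4 t j :
     mderivable (fun s => isum 0 k (fun i => W s (j + i))) t /\
     mderive (fun s => isum 0 k (fun i => W s (j + i))) t
       + isum 0 k (fun i => W t (j + i)) * isum (k - l) k (fun i => W t (j + i))
       - isum 0 l (fun i => W t (j + i)) * isum 0 k (fun i => W t (j + i))
     = qh t (j + k) *m rt t (j + k + - l) - qh t j *m rt t (j + - l).
Proof.
have ef : (fun s => isum 0 k (fun i => W s (j + i))) = (fun s => 1 + (phi s (j + k) - phi s j)).
  by apply/funext => s; rewrite IWk addrC.
have hd := mder_addcl 1 (mder_sub (dphi t (j + k)) (dphi t j)).
rewrite ef; have [h1 h2] := mder_mderive hd.
split => //; rewrite h2.
have C1 := (conj1 t j).2.
rewrite (mder_mderive (mder_sub (dphi t (j + k)) (dphi t j))).2 hJ in C1.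
have ekl : k - (k - l) = l by rewrite opprB addrC subrK.
rewrite IWk !IW ekl addr0 subr0.
set D := (phi t (j + k) - phi t j + 1).
have e1 : D * (phi t (j + k) - phi t (j + (k - l)) + c *~ l) = D * (phi t (j + k) - phi t (j + (k - l))) + D * (c *~ l) by rewrite mulrDr.
have e2 : (phi t (j + l) - phi t j + c *~ l) * D = (phi t (j + l) - phi t j) * D + (c *~ l) * D by rewrite mulrDl.
have e3 := cc D.
apply: (zuse e1); apply: (zuse (esym e2)); apply: (zuse e3); apply: (zuse C1); ztac.
Qed.

Lemma conj5 t j :
  qh t (j + k) = - (isum 0 k (fun i => W t (j + i)) *m qh t (j + (k - l))) - qh t j *m P.
Proof. by rewrite IWk; exact: conj2. Qed.

Lemma conj6 t j :
  rt t (j + - l) = - (rt t j *m isum 0 k (fun i => W t (j + i))) - P *m rt t (j + (k - l)).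
Proof. by rewrite IWk; exact: conj3. Qed.

End Main.

Unset Implicit Arguments.
Theorem mainTheorem4 (R : realType) (m n : nat) (k l : int) (hk : (0 < k)%R)
  (P Q : 'M[R[i]]_n.+1)
  (RP RQ : seq 'M[R[i]]_n.+1)
  (hRPu : uniq RP) (hRQu : uniq RQ)
  (hRP : forall L, L \in RP -> L \in unitmx /\ - (L ^ k + L ^ (k - l)) = P)
  (hRQ : forall L, L \in RQ -> L \in unitmx /\ - (L ^ k + L ^ (k - l)) = Q)
  (A : 'M[R[i]]_n.+1 -> 'M[R[i]]_(m.+1, n.+1))
  (B : 'M[R[i]]_n.+1 -> 'M[R[i]]_(n.+1, m.+1))
  (X : 'M[R[i]]_n.+1 -> 'M[R[i]]_n.+1 -> 'M[R[i]]_n.+1)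
  (hX : forall Lt L, Lt \in RQ -> L \in RP ->
          Lt ^ (- l) * X Lt L * L ^ l - X Lt L = B Lt *m A L)
  (om : R -> 'M[R[i]]_n.+1)
  (hom_d : forall t, mderivable om t)
  (hom_c : forall t, Q * om t = om t * P)
  (gamma2 : R -> 'M[R[i]]_n.+1)
  (hgamma2 : forall t, gamma2 t = - mderive om t)
  (theta : R -> int -> 'M[R[i]]_(m.+1, n.+1))
  (htheta : forall t j, theta t j =
     \sum_(L <- RP) (A L *m (mexp ((t%:C) *: L ^ l) * L ^ j)))
  (eta : R -> int -> 'M[R[i]]_(n.+1, m.+1))
  (heta : forall t j, eta t j =
     \sum_(Lt <- RQ) ((mexp ((- t)%:C *: Lt ^ l) * Lt ^ (- j)) *m B Lt))
  (Om : R -> int -> 'M[R[i]]_n.+1)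
  (hOm : forall t j, Om t j =
     \sum_(L <- RP) \sum_(Lt <- RQ)
        (mexp ((- t)%:C *: Lt ^ l) * Lt ^ (- j) * X Lt L
           * mexp ((t%:C) *: L ^ l) * L ^ j)
     + om t)
  (hOm_inv : forall t j, Om t j \in unitmx)
  (phi0 : 'M[R[i]]_m.+1)
  (phi : R -> int -> 'M[R[i]]_m.+1)
  (hphi : forall t j, phi t j = phi0 + theta t j *m (Om t j)^-1 *m eta t (j + - l))
  (qh : R -> int -> 'M[R[i]]_(m.+1, n.+1))
  (hqh : forall t j, qh t j = - (theta t j *m (Om t j)^-1 *m gamma2 t))
  (rt : R -> int -> 'M[R[i]]_(n.+1, m.+1))
  (hrt : forall t j, rt t j = - ((Om t (j + l))^-1 *m eta t j))
  (W : R -> int -> 'M[R[i]]_m.+1)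
  (hW : forall t j, W t j = phi t (j + 1) - phi t j + (k%:~R)^-1%:M) :
  (forall t j,
     mderivable (fun s => phi s (j + k) - phi s j) t /\
     mderive (fun s => phi s (j + k) - phi s j) t
       + (phi t (j + k) - phi t j + 1)
           * (phi t (j + (k - l) + l) - phi t (j + (k - l)))
       - (phi t (j + l) - phi t j) * (phi t (j + k) - phi t j + 1)
     = qh t (j + k) *m rt t (j + k + - l) - qh t j *m rt t (j + - l))
  /\ (forall t j,
     qh t (j + k) = - ((phi t (j + k) - phi t j + 1) *m qh t (j + (k - l)))
                    - qh t j *m P)
  /\ (forall t j,
     rt t (j + - l) = - (rt t j *m (phi t (j + k) - phi t j + 1))
                      - P *m rt t (j + (k - l)))
  /\ (forall t j,
     mderivable (fun s => isum 0 k (fun i => W s (j + i))) t /\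
     mderive (fun s => isum 0 k (fun i => W s (j + i))) t
       + isum 0 k (fun i => W t (j + i)) * isum (k - l) k (fun i => W t (j + i))
       - isum 0 l (fun i => W t (j + i)) * isum 0 k (fun i => W t (j + i))
     = qh t (j + k) *m rt t (j + k + - l) - qh t j *m rt t (j + - l))
  /\ (forall t j,
     qh t (j + k) = - (isum 0 k (fun i => W t (j + i)) *m qh t (j + (k - l)))
                    - qh t j *m P)
  /\ (forall t j,
     rt t (j + - l) = - (rt t j *m isum 0 k (fun i => W t (j + i)))
                      - P *m rt t (j + (k - l))).

Proof.
split; first by move=> t j; apply: (conj1 hRP hRQ); eassumption.
split; first by move=> t j; apply: (conj2 hRP hRQ); eassumption.
split; first by move=> t j; apply: (conj3 hRP hRQ); eassumption.
split; first by move=> t j; apply: (conj4 hk hRP hRQ); eassumption.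
split; first by move=> t j; apply: (conj5 hk hRP hRQ); eassumption.
by move=> t j; apply: (conj6 hk hRP hRQ); eassumption.
Qed.
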